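(* Let $n\ge 2$ and let $$A=\begin{bmatrix}0&a_{12}&\mathbf 0^T\\ a_{21}&0&\mathbf y^T\\ \mathbf x&\mathbf 0&R\end{bmatrix}$$ be a real $n\times n$ matrix, where $a_{12},a_{21}\in\mathbb R$ with $a_{12}\neq0$, $\mathbf x,\mathbf y\in\mathbb R^{n-2}$ and $R$ is a real $(n-2)\times(n-2)$ matrix. If $\lambda$ is a simple eigenvalue of $A$ such that $A\mathbf u=\lambda\mathbf u$ and $\mathbf v^TA=\lambda\mathbf v^T$ for some entrywise positive $\mathbf u,\mathbf v\in\mathbb R^n$, then $\lambda$ is a simple eigenvalue of the $(n-1)\times(n-1)$ matrix $$B=\begin{bmatrix}\lambda+a_{21}-\frac{\lambda^2}{a_{12}}&\mathbf y^T\\ \mathbf x&R\end{bmatrix}.$$ Moreover, $B\mathbf w=\lambda\mathbf w$ and $\mathbf z^TB=\lambda\mathbf z^T$, where $w_1=u_1$, $z_1=v_2$, and $w_i=u_{i+1}$, $z_i=v_{i+1}$ for $i\ge 2$.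
   Context: A simple eigenvalue is one of algebraic multiplicity one; $\mathbf 0$ denotes a zero column vector of appropriate size. *)

(* Defs.v *)
From mathcomp Require Import all_boot all_order all_algebra.
Set Implicit Arguments. Unset Strict Implicit. Unset Printing Implicit Defensive.
Import Order.TTheory GRing.Theory Num.Theory.
Local Open Scope ring_scope.

Definition simple_eigenvalue (R : fieldType) (n : nat) (A : 'M[R]_n) (l : R) : Prop :=
  mup l (char_poly A) = 1%N.

Definition pos_vec (R : numDomainType) (n : nat) (u : 'cV[R]_n) : Prop :=
  forall i, 0 < u i 0.

(* Main.v *)
Require Import Defs.
From mathcomp Require Import all_boot all_order all_algebra.
Import Order.TTheory GRing.Theory Num.Theory.
Local Open Scope ring_scope.
From mathcomp Require Import ring lra.

Lemma deflate (F : fieldType) n (M : 'M[F]_n) (w z : 'cV[F]_n) (l : F) :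
  M *m w = l *: w ->
  ('X - l%:P) * char_poly (M + w *m z^T) =
  char_poly M * ('X - l%:P - ((z^T *m w) 0 0)%:P).
Proof.
move=> Mw.
set X := char_poly_mx M; set W := map_mx polyC w; set Z := map_mx polyC z.
set s := 'X - l%:P.
have XW : X *m W = s *: W.
  rewrite /X /char_poly_mx mulmxBl mul_scalar_mx -map_mxM Mw map_mxZ /= scalerBl //.
have E1 : char_poly_mx (M + w *m z^T) = X - W *m Z^T.
  by rewrite /char_poly_mx map_mxD map_mxM -map_trmx opprD addrA.
have ZW : (Z^T *m W) 0 0 = ((z^T *m w) 0 0)%:P.
  by rewrite map_trmx -map_mxM mxE.
set N := block_mx (1%:M : 'M_1) Z^T W X.
have d1 : \det N = \det (X - W *m Z^T).
  have -> : N = block_mx 1%:M 0 W 1%:M *m block_mx 1%:M Z^T 0 (X - W *m Z^T).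
    rewrite mulmx_block !mul1mx !mulmx1 ?mul0mx ?mulmx0 ?addr0 ?add0r.
    by rewrite addrC subrK.
  by rewrite det_mulmx det_lblock det_ublock !det1 !mul1r.
have d2 : \det (N *m block_mx (s%:M : 'M_1) 0 (- W) 1%:M) = \det N * s.
  by rewrite det_mulmx det_lblock det1 mulr1 det_mx11 mxE eqxx mulr1n.
have E2 : N *m block_mx (s%:M : 'M_1) 0 (- W) 1%:M
         = block_mx (s%:M - Z^T *m W) Z^T 0 X.
  rewrite mulmx_block !mul1mx !mulmx1 ?mulmx0 ?mul0mx ?addr0 ?add0r mulmxN.
  by rewrite mulmxN XW mul_mx_scalar subrr.
rewrite /char_poly E1 -d1 mulrC -d2 E2 det_ublock det_mx11.
rewrite -ZW !mxE eqxx mulr1n mulrC /X.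
congr (_ * (_ - _)); apply: eq_bigr => j _; rewrite !mxE.
Qed.
Lemma cV2E (F : nzRingType) (c : 'cV[F]_2) :
  c = col_mx (c ord0 ord0)%:M (c ord_max ord0)%:M :> 'cV_(1 + 1).
Proof.
apply/matrixP => i j; rewrite ord1 mxE.
case: splitP => k Hk; rewrite !mxE (_ : k == 0) ?mulr1n;
  try (by case: k {Hk} => [[]]); congr (c _ _); apply: val_inj;
  by rewrite /= Hk; case: k {Hk} => [[]].
Qed.

Lemma I2E (k : 'I_(1 + 1)) : k = lshift 1 ord0 \/ k = rshift 1 ord0.
Proof.
case: (splitP k) => k' Hk; [left|right]; apply: val_inj; by rewrite /= Hk (ord1 k').
Qed.

Lemma T2E (F : nzRingType) (a12 a21 : F) :
  (\matrix_(i < 2, j < 2) (if i == j then 0 else if i == 0 then a12 else a21))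
  = block_mx (0 : 'M_1) a12%:M a21%:M 0 :> 'M_(1 + 1).
Proof.
apply/matrixP => i j.
case: (I2E i) => ->; case: (I2E j) => ->;
  rewrite ?block_mxEul ?block_mxEur ?block_mxEdl ?block_mxEdr !mxE /=. all: try done.
Qed.

Lemma char_poly_tr (F : fieldType) n (A : 'M[F]_n) : char_poly A^T = char_poly A.
Proof.
by rewrite /char_poly -det_tr /char_poly_mx linearB /= tr_scalar_mx -map_trmx trmxK.
Qed.

Lemma root_col (F : fieldType) n (A : 'M[F]_n) a :
  root (char_poly A) a -> exists2 q : 'cV_n, q != 0 & A *m q = a *: q.
Proof.
rewrite -char_poly_tr -eigenvalue_root_char => /eigenvalueP [v Hv vn0].
exists v^T; first by rewrite trmx_eq0.
by rewrite -[A]trmxK -trmx_mul Hv linearZ.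
Qed.

Lemma col_root (F : fieldType) n (A : 'M[F]_n) a (q : 'cV_n) :
  q != 0 -> A *m q = a *: q -> root (char_poly A) a.
Proof.
move=> qn0 Hq; rewrite -char_poly_tr -eigenvalue_root_char; apply/eigenvalueP.
exists q^T; last by rewrite trmx_eq0.
by rewrite -trmx_mul Hq linearZ.
Qed.

Lemma mx11_mul0 (F : fieldType) (P : 'M[F]_1) n (Q : 'M_(1, n)) :
  P 0 0 != 0 -> P *m Q = 0 -> Q = 0.
Proof.
move=> /negPf H; rewrite [P]mx11_scalar mul_scalar_mx => /eqP.
by rewrite scaler_eq0 H /= => /eqP.
Qed.

Lemma key (F : fieldType) n (M : 'M[F]_n) (w z : 'cV_n) l :
  M *m w = l *: w -> z^T *m M = l *: z^T -> (z^T *m w) 0 0 != 0 ->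
  ('X - l%:P)^+2 %| char_poly M ->
  exists2 q : 'cV_n, q != 0 & M *m q = l *: q /\ z^T *m q = 0.
Proof.
move=> Mw zM kn0 /dvdpP [g Hg].
have D := @deflate _ _ M w z l Mw; rewrite Hg in D.
set s := 'X - l%:P in D.
have sn0 : s != 0 by apply: monic_neq0; apply: monicXsubC.
have : root (char_poly (M + w *m z^T)) l.
  have H : char_poly (M + w *m z^T) = g * s * (s - ((z^T *m w) 0 0)%:P).
    apply: (mulfI sn0); rewrite D; ring.
  by rewrite H !rootM root_XsubC eqxx orbT.
case/root_col => q qn0 Hq.
have zq : z^T *m q = 0.
  apply: (@mx11_mul0 _ _ _ _ kn0).
  move: (congr1 (mulmx z^T) Hq).
  rewrite mulmxDl mulmxDr !mulmxA zM -scalemxAl -scalemxAr -mulmxA.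
  by move/eqP; rewrite -subr_eq0 addrC addKr => /eqP.
exists q => //; split => //.
by rewrite -Hq mulmxDl -mulmxA zq mulmx0 addr0.
Qed.

Lemma key2 (F : fieldType) n (M : 'M[F]_n) (w z q : 'cV_n) l :
  M *m w = l *: w -> (z^T *m w) 0 0 != 0 ->
  q != 0 -> M *m q = l *: q -> z^T *m q = 0 ->
  ('X - l%:P)^+2 %| char_poly M.
Proof.
move=> Mw kn0 qn0 Mq zq.
have Hq1 : (M + w *m z^T) *m q = l *: q by rewrite mulmxDl -mulmxA zq mulmx0 addr0.
have /factor_theorem [g Hg] := @col_root _ _ _ _ _ qn0 Hq1.
have D := @deflate _ _ M w z l Mw; rewrite Hg in D.
set k := (z^T *m w) 0 0 in D kn0.
have pn0 : char_poly M != 0 by apply: monic_neq0; apply: char_poly_monic.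
have Xn0 : 'X - (l + k)%:P != 0 by apply: monic_neq0; apply: monicXsubC.
have H : ('X - l%:P)^+2 %| char_poly M * ('X - (l + k)%:P).
  apply/dvdpP; exists g.
  have -> : 'X - (l + k)%:P = 'X - l%:P - k%:P by rewrite polyCD opprD addrA.
  by rewrite -D; ring.
move: H; rewrite -mup_geq ?mulf_neq0 // mupMl ?mup_geq //.
rewrite root_XsubC; apply/eqP => /(congr1 (fun t => t - l)).
rewrite subrr addrC addKr => /eqP; by rewrite eq_sym (negPf kn0).
Qed.

Arguments key {F n M w z l}.
Arguments key2 {F n M w z q l}.
Arguments col_root {F n A a q}.
Arguments root_col {F n A a}.

Theorem lemma3p13 (R : realFieldType) (m : nat) (a12 a21 : R)
    (x y : 'cV[R]_m) (Rm : 'M[R]_m) (l : R) (u v : 'cV[R]_(2 + m)) :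
  a12 != 0 ->
  let A : 'M[R]_(2 + m) :=
    block_mx (\matrix_(i < 2, j < 2) (if i == j then 0 else if i == 0 then a12 else a21))
             (col_mx (0 : 'rV[R]_m) y^T)
             (row_mx x (0 : 'cV[R]_m))
             Rm in
  let B : 'M[R]_(1 + m) :=
    block_mx (l + a21 - l ^+ 2 / a12)%:M y^T x Rm in
  let w : 'cV[R]_(1 + m) := col_mx ((usubmx u) ord0 ord0)%:M (dsubmx u) in
  let z : 'cV[R]_(1 + m) := col_mx ((usubmx v) ord_max ord0)%:M (dsubmx v) in
  simple_eigenvalue A l ->
  pos_vec u -> pos_vec v ->
  A *m u = l *: u -> v^T *m A = l *: v^T ->
  simple_eigenvalue B l /\ B *m w = l *: w /\ z^T *m B = l *: z^T.
Proof.
move=> a12n0 A B w z simA pu pv Au vA.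
have Au0 := Au.
set a := usubmx u ord0 ord0 in w *; set b := usubmx u ord_max ord0.
set ur := dsubmx u in w *.
set c := usubmx v ord0 ord0; set d := usubmx v ord_max ord0 in z *.
set vr := dsubmx v in z *.
have uE : u = col_mx (col_mx a%:M b%:M) ur by rewrite -cV2E vsubmxK.
have vE : v = col_mx (col_mx c%:M d%:M) vr by rewrite -cV2E vsubmxK.
have AE : A = block_mx (block_mx 0 a12%:M a21%:M 0 : 'M_(1 + 1)) (col_mx 0 y^T : 'M_(1 + 1, m)) (row_mx x 0 : 'M_(m, 1 + 1)) Rm.
  by rewrite /A T2E.
rewrite AE {1 2}uE mul_block_col (@mul_block_col _ 1 1 1 1 1) (@mul_col_mx _ 1 1 m 1) (@mul_row_col _ m 1 1 1) in Au.
move: Au; rewrite !mul0mx ?add0r ?addr0 !scale_col_mx (@add_col_mx _ 1 1 1) (@scale_col_mx _ 1 1 1) ?add0r ?addr0 => /eq_col_mx [/(@eq_col_mx _ 1 1 1) [U1 U2] U3].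
have U1s : a12 * b = l * a.
  by move/(congr1 (fun M : 'M_1 => M 0 0)): U1; rewrite -scalar_mxM scale_scalar_mx !mxE.
have U2s : y^T *m ur = (l * b - a21 * a)%:M.
  by rewrite raddfB /= -scale_scalar_mx -U2 scalar_mxM [_ + y^T *m ur]addrC addrK.
rewrite AE vE tr_col_mx (@tr_col_mx _ 1 1 1) !tr_scalar_mx mul_row_block in vA.
rewrite (@mul_row_block _ 1 1 1 1 1) (@mul_row_col _ 1 1 1 m) (@mul_mx_row _ 1 m 1 1) in vA.
move: vA; rewrite ?mulmx0 ?mul0mx ?add0r ?addr0 (@add_row_mx _ 1 1 1) !scale_row_mx (@scale_row_mx _ 1 1 1).
rewrite ?add0r ?addr0 => /eq_row_mx [/(@eq_row_mx _ 1 1 1) [V1 V2] V3].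
have V2s : c * a12 = l * d.
  by move/(congr1 (fun M : 'M_1 => M 0 0)): V2; rewrite -scalar_mxM scale_scalar_mx !mxE.
have V1s : vr^T *m x = (l * c - d * a21)%:M.
  by rewrite raddfB /= -scale_scalar_mx -V1 scalar_mxM [_ + vr^T *m x]addrC addrK.
have hb : b = l * a / a12 by rewrite -U1s [a12 * b]mulrC mulfK.
have hc : c = l * d / a12 by rewrite -V2s mulfK.
have Bw : B *m w = l *: w.
  rewrite /B /w mul_block_col scale_col_mx U3 U2s -scalar_mxM scale_scalar_mx -raddfD.
  congr col_mx; congr (_%:M); rewrite hb; field; exact: a12n0.
have zB : z^T *m B = l *: z^T.
  rewrite /B /z tr_col_mx tr_scalar_mx mul_row_block scale_row_mx V3 V1s.
  rewrite -scalar_mxM scale_scalar_mx -raddfD.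
  congr row_mx; congr (_%:M); rewrite hc; field; exact: a12n0.
have ha : 0 < a by rewrite /a mxE; apply: pu.
have hd : 0 < d by rewrite /d mxE; apply: pv.
have kB : (z^T *m w) 0 0 != 0.
  have -> : z^T *m w = d%:M *m a%:M + vr^T *m ur.
    by rewrite /z /w tr_col_mx tr_scalar_mx mul_row_col.
  rewrite mxE -scalar_mxM [(d * a)%:M _ _]mxE eqxx mulr1n.
  have S : 0 <= (vr^T *m ur) 0 0.
    rewrite mxE; apply: sumr_ge0 => i _; rewrite !mxE; apply: mulr_ge0; apply: ltW.
      exact: pv.
    exact: pu.
  have hp := mulr_gt0 hd ha.
  apply: lt0r_neq0; lra.
have kA : (v^T *m u) 0 0 != 0.
  rewrite mxE (bigD1 (lshift m (ord0 : 'I_2))) //=.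
  have S : 0 <= \sum_(i | i != lshift m (ord0 : 'I_2)) v^T 0 i * u i 0.
    apply: sumr_ge0 => i _; rewrite !mxE; apply: mulr_ge0; apply: ltW.
      exact: pv.
    exact: pu.
  have hp : 0 < v^T 0 (lshift m (ord0 : 'I_2)) * u (lshift m (ord0 : 'I_2)) 0.
    by rewrite mxE; apply: mulr_gt0; [apply: pv | apply: pu].
  apply: lt0r_neq0; lra.
have wn0 : w != 0.
  apply/negP => /eqP w0.
  have : w (lshift m ord0) 0 = a by rewrite /w col_mxEu mxE eqxx.
  by rewrite w0 mxE => a0; rewrite -a0 ltxx in ha.
split; last split; last exact: zB.
  2: by rewrite Bw /w scale_col_mx.
have pBn0 : char_poly B != 0 by apply: monic_neq0; apply: char_poly_monic.
rewrite /simple_eigenvalue; apply/eqP; rewrite eqn_leq; apply/andP; split; last first.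
  by rewrite (mup_geq _ _ pBn0) expr1 dvdp_XsubCl; exact: col_root wn0 Bw.
rewrite -ltnS (mup_ltn _ _ pBn0); apply/negP => Hd.
have [q qn0 [Bq zq]] := key Bw zB kB Hd.
set p := usubmx q 0 0; set qr := dsubmx q.
have qE : q = col_mx p%:M qr by rewrite -mx11_scalar vsubmxK.
move: Bq; rewrite /B {1 2}qE mul_block_col scale_col_mx => /eq_col_mx [Q1 Q2].
have Q1s : y^T *m qr = ((l - (l + a21 - l ^+ 2 / a12)) * p)%:M.
  apply: (addrI ((l + a21 - l ^+ 2 / a12)%:M *m p%:M)).
  rewrite Q1 -scalar_mxM scale_scalar_mx -raddfD; congr (_%:M); ring.
pose q' : 'cV_(2 + m) := col_mx (col_mx p%:M (l * p / a12)%:M : 'cV_(1 + 1)) qr.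
have Aq' : A *m q' = l *: q'.
  rewrite AE /q' mul_block_col (@mul_block_col _ 1 1 1 1 1) (@mul_col_mx _ 1 1 m 1).
  rewrite (@mul_row_col _ m 1 1 1) !mul0mx ?add0r ?addr0 (@add_col_mx _ 1 1 1).
  rewrite ?add0r ?addr0 scale_col_mx (@scale_col_mx _ 1 1 1) Q2 Q1s.
  rewrite -!scalar_mxM !scale_scalar_mx -raddfD.
  have e1 : a12 * (l * p / a12) = l * p by field; exact: a12n0.
  have e2 : a21 * p + (l - (l + a21 - l ^+ 2 / a12)) * p = l * (l * p / a12).
    by field; exact: a12n0.
  by rewrite e1 e2.
pose q'' := (v^T *m u) 0 0 *: q' - (v^T *m q') 0 0 *: u.
have Aq'' : A *m q'' = l *: q''.
  rewrite /q'' mulmxBr -!scalemxAr Aq' Au0 !scalerA scalerBr !scalerA.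
  by rewrite (mulrC l) (mulrC l).
have vq'' : v^T *m q'' = 0.
  rewrite /q'' mulmxBr -!scalemxAr; move: (v^T *m q') (v^T *m u) => P Q.
  by apply/matrixP => i j; rewrite !mxE (ord1 i) (ord1 j) mulrC subrr.
have q''n0 : q'' != 0.
  apply/negP => /eqP H0.
  have H1 : (v^T *m u) 0 0 *: q' = (v^T *m q') 0 0 *: u.
    by apply/eqP; rewrite -subr_eq0 -/q'' H0.
  move: H1; rewrite /q' {2}uE !scale_col_mx !(@scale_col_mx _ 1 1 1).
  move=> /eq_col_mx [/(@eq_col_mx _ 1 1 1) [H2 _] H3].
  have H4 : (v^T *m u) 0 0 *: q = (v^T *m q') 0 0 *: w.
    by rewrite qE /w !scale_col_mx H2 H3.
  have : (v^T *m q') 0 0 * (z^T *m w) 0 0 = 0.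
    move/(congr1 (fun M => (z^T *m M) 0 0)): H4.
    rewrite /= -!scalemxAr zq scaler0 [(_ *: (z^T *m w)) 0 0]mxE => <-.
    by rewrite mxE.
  move/eqP; rewrite mulf_eq0 (negPf kB) orbF => /eqP t0.
  move: H4; rewrite t0 scale0r => /eqP; rewrite scaler_eq0 (negPf kA) (negPf qn0).
  by [].
have := key2 Au0 kA q''n0 Aq'' vq''.
have pAn0 : char_poly A != 0 by apply: monic_neq0; apply: char_poly_monic.
by rewrite -(mup_geq _ _ pAn0) simA.
Qed.
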